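(* Let $S$ be the $3\times 8$ matrix \[ S=\begin{bmatrix} 0 & \epsilon_1 & 0 & 0 & \epsilon_2 & \epsilon_3 & 0 & \epsilon_4 \\ 0 & 0 & -1 & 0 & -1 & 0 & -1 & -1 \\ 0 & 0 & 0 & -1 & 0 & -1 & -1 & -1 \end{bmatrix}, \] where $\epsilon_1,\epsilon_2,\epsilon_3,\epsilon_4\in\{-1,1\}$ and at least one $\epsilon_i$ equals $1$. Let $\sigma=(\sigma_1,\sigma_2,\sigma_3,\sigma_4)\in\{+,-\}^4$ with $\sigma_i$ the sign of $\epsilon_i$, and let $r\in[0,1)^3$ be such that $r+S$ is totally $1$-submodular. (i) If $\sigma \in \{(+,-,+,-),(-,+,-,+)\}$, then $r \in \mathrm{conv}\{(0,\tfrac14,\tfrac12)^\intercal,(0,\tfrac34,\tfrac12)^\intercal\}$. (ii) If $\sigma \in \{(+,+,-,-),(-,-,+,+)\}$, then $r \in \mathrm{conv}\{(0,\tfrac12,\tfrac14)^\intercal,(0,\tfrac12,\tfrac34)^\intercal\}$. (iii) If $\sigma$ is none of the four sign vectors listed in (i) and (ii), then $r=(0,\tfrac12,\tfrac12)^\intercal$.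
   Context: A real matrix is totally $1$-submodular if every square submatrix (of every size) has determinant of absolute value at most $1$. For $r\in\mathbb{R}^3$, $r+S$ denotes the matrix obtained by adding $r$ to every column of $S$. (Such $S$ are exactly the Sauer Matrices of size 3 and type $(1,2)$: each subset of $\{1,2,3\}$ is the support of exactly one column, and exactly the first row contains an entry equal to $1$.) *)

(* Defs.v *)
From HB Require Import structures.
From mathcomp Require Import all_boot all_order all_algebra.
Set Implicit Arguments. Unset Strict Implicit. Unset Printing Implicit Defensive.
Import Order.TTheory GRing.Theory Num.Theory.
Local Open Scope ring_scope.

Definition totally_1_submodular (R : numDomainType) (m n : nat)
  (A : 'M[R]_(m, n)) : Prop :=
  forall (k : nat) (f : 'I_k -> 'I_m) (g : 'I_k -> 'I_n),
    {homo f : x y / (x < y)%N >-> (x < y)%N} ->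
    {homo g : x y / (x < y)%N >-> (x < y)%N} ->
    `|\det (\matrix_(i < k, j < k) A (f i) (g j))| <= 1.

Definition add_col (R : zmodType) (m n : nat) (r : 'cV[R]_m) (S : 'M[R]_(m, n))
  : 'M[R]_(m, n) := \matrix_(i, j) (r i 0 + S i j).

Definition S_mat (R : ringType) (e1 e2 e3 e4 : R) : 'M[R]_(3, 8) :=
  \matrix_(i < 3, j < 8)
    nth 0 (nth [::] [:: [:: 0; e1; 0; 0; e2; e3; 0; e4];
                        [:: 0; 0; -1; 0; -1; 0; -1; -1];
                        [:: 0; 0; 0; -1; 0; -1; -1; -1]] i) j.

Definition conv2 (R : numDomainType) (m : nat) (a b x : 'cV[R]_m) : Prop :=
  exists t : R, [/\ 0 <= t, t <= 1 & x = (1 - t) *: a + t *: b].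

Definition vec3 (R : ringType) (x y z : R) : 'cV[R]_3 :=
  \col_(i < 3) nth 0 [:: x; y; z] i.

(* Main.v *)
Require Import Defs.
From HB Require Import structures.
From mathcomp Require Import all_boot all_order all_algebra.
Set Implicit Arguments. Unset Strict Implicit. Unset Printing Implicit Defensive.
Import Order.TTheory GRing.Theory Num.Theory.
Local Open Scope ring_scope.
From mathcomp Require Import ring lra zify.

Notation o3 k := (@Ordinal 3 k isT).
Notation o8 k := (@Ordinal 8 k isT).

Lemma T3 (R : realFieldType) (A : 'M[R]_(3,8)) (j1 j2 j3 : 'I_8) :
  totally_1_submodular A -> (j1 < j2)%N -> (j2 < j3)%N ->
  `| A (o3 0) j1 * (A (o3 1) j2 * A (o3 2) j3 - A (o3 1) j3 * A (o3 2) j2)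
   - A (o3 0) j2 * (A (o3 1) j1 * A (o3 2) j3 - A (o3 1) j3 * A (o3 2) j1)
   + A (o3 0) j3 * (A (o3 1) j1 * A (o3 2) j2 - A (o3 1) j2 * A (o3 2) j1)| <= 1.
Proof.
move=> H h12 h23.
pose f := fun x : 'I_3 => match val x with 0 => o3 0 | 1 => o3 1 | _ => o3 2 end.
pose g := fun x : 'I_3 => match val x with 0 => j1 | 1 => j2 | _ => j3 end.
have := H 3 f g.
have hf : {homo f : x y / (x < y)%N >-> (x < y)%N}.
  by move=> [[|[|[|?]]] ?] [[|[|[|?]]] ?].
have hg : {homo g : x y / (x < y)%N >-> (x < y)%N}.
  move=> [[|[|[|?]]] ?] [[|[|[|?]]] ?] //=; rewrite /g /=; lia.
move=> /(_ hf hg).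
rewrite (expand_det_row _ ord0) !big_ord_recl big_ord0 /cofactor.
rewrite !(expand_det_row _ ord0) !big_ord_recl !big_ord0 /cofactor !det_mx11 !mxE /=.
rewrite /f /g /= => Hd; apply: le_trans Hd; rewrite le_eqVlt; apply/orP; left; apply/eqP; congr (`|_|).
ring.
Qed.

Lemma T2 (R : realFieldType) (A : 'M[R]_(3,8)) (i1 i2 : 'I_3) (j1 j2 : 'I_8) :
  totally_1_submodular A -> (i1 < i2)%N -> (j1 < j2)%N ->
  `| A i1 j1 * A i2 j2 - A i1 j2 * A i2 j1 | <= 1.
Proof.
move=> H h1 h2.
pose f := fun x : 'I_2 => match val x with 0 => i1 | _ => i2 end.
pose g := fun x : 'I_2 => match val x with 0 => j1 | _ => j2 end.
have := H 2 f g.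
have hf : {homo f : x y / (x < y)%N >-> (x < y)%N}.
  by move=> [[|[|?]] ?] [[|[|?]] ?] //=; rewrite /f /=; lia.
have hg : {homo g : x y / (x < y)%N >-> (x < y)%N}.
  by move=> [[|[|?]] ?] [[|[|?]] ?] //=; rewrite /g /=; lia.
move=> /(_ hf hg).
rewrite (expand_det_row _ ord0) !big_ord_recl big_ord0 /cofactor !det_mx11 !mxE.
rewrite /f /g /= => Hd; apply: le_trans Hd; rewrite le_eqVlt; apply/orP; left; apply/eqP; congr (`|_|).
ring.
Qed.

Lemma T1 (R : realFieldType) (A : 'M[R]_(3,8)) (i : 'I_3) (j : 'I_8) :
  totally_1_submodular A -> `| A i j | <= 1.
Proof.
move=> H.
have := H 1 (fun _ => i) (fun _ => j).
have h : forall T : finType, forall (x0 : T) (lt : rel T), {homo (fun _ : 'I_1 => x0) : x y / (x < y)%N >-> lt x y}.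
  by move=> T x0 lt [[|?] ?] [[|?] ?].
by move=> /(_ (h _ _ _) (h _ _ _)); rewrite det_mx11 mxE.
Qed.

Lemma conv_lin (R : realFieldType) (x y : R) : -1 <= x /\ x <= 1 -> x = y -> -1 <= y /\ y <= 1.
Proof. by move=> ? <-. Qed.

Lemma m1n1 (R : realFieldType) : (-1 : R) = 1 -> False.
Proof. move=> h; have : (2 : R) == 0 by rewrite -[2]/(1 + 1) -{1}h addNr. by rewrite pnatr_eq0. Qed.

Ltac kill E := exfalso; injection E; intros;
  match goal with
  | H : (-1 = 1) |- _ => exact: (m1n1 H)
  | H : (1 = -1) |- _ => exact: (m1n1 (esym H))
  end.

Lemma nrm (R : realFieldType) (x : R) : `|x| <= 1 -> -1 <= x /\ x <= 1.
Proof. by rewrite ler_norml => /andP. Qed.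

Theorem proposition4p2 (R : realFieldType) (e1 e2 e3 e4 : R) (r : 'cV[R]_3) :
  (e1 = 1 \/ e1 = -1) -> (e2 = 1 \/ e2 = -1) ->
  (e3 = 1 \/ e3 = -1) -> (e4 = 1 \/ e4 = -1) ->
  (e1 = 1 \/ e2 = 1 \/ e3 = 1 \/ e4 = 1) ->
  (forall i, 0 <= r i 0 /\ r i 0 < 1) ->
  totally_1_submodular (add_col r (S_mat e1 e2 e3 e4)) ->
  [/\ ((e1, e2, e3, e4) = (1, -1, 1, -1) \/ (e1, e2, e3, e4) = (-1, 1, -1, 1) ->
        conv2 (vec3 0 (1/4) (1/2)) (vec3 0 (3/4) (1/2)) r),
      ((e1, e2, e3, e4) = (1, 1, -1, -1) \/ (e1, e2, e3, e4) = (-1, -1, 1, 1) ->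
        conv2 (vec3 0 (1/2) (1/4)) (vec3 0 (1/2) (3/4)) r)
    & (~ ((e1, e2, e3, e4) = (1, -1, 1, -1) \/ (e1, e2, e3, e4) = (-1, 1, -1, 1) \/
          (e1, e2, e3, e4) = (1, 1, -1, -1) \/ (e1, e2, e3, e4) = (-1, -1, 1, 1)) ->
        r = vec3 0 (1/2) (1/2))].
Proof.
move=> He1 He2 He3 He4 Hone Hr H.
set A := add_col r _ in H.
have Hrv : forall i : 'I_3, r i 0 = nth 0 [:: r (o3 0) 0; r (o3 1) 0; r (o3 2) 0] i.
  by move=> [[|[|[|?]]] p] //=; congr (r _ 0); apply/val_inj.
have [a0 a1] := Hr (o3 0); have [b0 b1] := Hr (o3 1); have [c0 c1] := Hr (o3 2).
set a := r (o3 0) 0 in Hrv a0 a1 *.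
set b := r (o3 1) 0 in Hrv b0 b1 *.
set c := r (o3 2) 0 in Hrv c0 c1 *.
have E1 := nrm (T1 (o3 0) (o8 1) H).
have E4 := nrm (T1 (o3 0) (o8 4) H).
have E5 := nrm (T1 (o3 0) (o8 5) H).
have E7 := nrm (T1 (o3 0) (o8 7) H).
have D1 := nrm (@T2 R A (o3 0) (o3 1) (o8 1) (o8 5) H isT isT).
have D2 := nrm (@T2 R A (o3 0) (o3 1) (o8 4) (o8 7) H isT isT).
have D3 := nrm (@T2 R A (o3 0) (o3 2) (o8 1) (o8 4) H isT isT).
have D4 := nrm (@T2 R A (o3 0) (o3 2) (o8 5) (o8 7) H isT isT).
have F1 := nrm (@T3 R A (o8 0) (o8 4) (o8 5) H isT isT).
have F2 := nrm (@T3 R A (o8 0) (o8 4) (o8 7) H isT isT).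
have F3 := nrm (@T3 R A (o8 0) (o8 5) (o8 7) H isT isT).
have F4 := nrm (@T3 R A (o8 1) (o8 2) (o8 7) H isT isT).
have F5 := nrm (@T3 R A (o8 1) (o8 3) (o8 7) H isT isT).
have F6 := nrm (@T3 R A (o8 2) (o8 5) (o8 7) H isT isT).
have F7 := nrm (@T3 R A (o8 3) (o8 4) (o8 7) H isT isT).
have F8 := nrm (@T3 R A (o8 4) (o8 5) (o8 6) H isT isT).
move: E1 E4 E5 E7 D1 D2 D3 D4 F1 F2 F3 F4 F5 F6 F7 F8.
have Ae : forall i j, A i j = r i 0 + nth 0 (nth [::] [:: [:: 0; e1; 0; 0; e2; e3; 0; e4];
                        [:: 0; 0; -1; 0; -1; 0; -1; -1];
                        [:: 0; 0; 0; -1; 0; -1; -1; -1]] i) j.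
  by move=> i j; rewrite /A /add_col /S_mat !mxE.
rewrite !Ae /= -/a -/b -/c.
have Hrvec : r = vec3 a b c.
  by apply/matrixP => i j; rewrite (ord1 j) Hrv !mxE.
rewrite Hrvec; clear Hrvec Hrv.
move=> E1 E4 E5 E7.
have a0' : a = 0.
  case: Hone => [?|[?|[?|?]]]; lra.
rewrite a0' => D1 D2 D3 D4 F1 F2 F3 F4 F5 F6 F7 F8.
have G1 : -1 <= e1 * (b + 0) - e3 * (b + 0) /\ e1 * (b + 0) - e3 * (b + 0) <= 1 by apply: (conv_lin D1); ring.
have G2 : -1 <= e2 * (b + -1) - e4 * (b + -1) /\ e2 * (b + -1) - e4 * (b + -1) <= 1 by apply: (conv_lin D2); ring.
have G3 : -1 <= e1 * (c + 0) - e2 * (c + 0) /\ e1 * (c + 0) - e2 * (c + 0) <= 1 by apply: (conv_lin D3); ring.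
have G4 : -1 <= e3 * (c + -1) - e4 * (c + -1) /\ e3 * (c + -1) - e4 * (c + -1) <= 1 by apply: (conv_lin D4); ring.
have H1 : -1 <= 0 * (-1 * b + -1 * c + 1) - e2 * (-1 * b + 0 * c + 0) + e3 * (0 * b + 1 * c + 0) /\ 0 * (-1 * b + -1 * c + 1) - e2 * (-1 * b + 0 * c + 0) + e3 * (0 * b + 1 * c + 0) <= 1 by apply: (conv_lin F1); ring.
have H2 : -1 <= 0 * (-1 * b + 0 * c + 1) - e2 * (-1 * b + 1 * c + 0) + e4 * (0 * b + 1 * c + 0) /\ 0 * (-1 * b + 0 * c + 1) - e2 * (-1 * b + 1 * c + 0) + e4 * (0 * b + 1 * c + 0) <= 1 by apply: (conv_lin F2); ring.
have H3 : -1 <= 0 * (0 * b + 1 * c + -1) - e3 * (-1 * b + 1 * c + 0) + e4 * (-1 * b + 0 * c + 0) /\ 0 * (0 * b + 1 * c + -1) - e3 * (-1 * b + 1 * c + 0) + e4 * (-1 * b + 0 * c + 0) <= 1 by apply: (conv_lin F3); ring.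
have H4 : -1 <= e1 * (-1 * b + 0 * c + 1) - 0 * (-1 * b + 1 * c + 0) + e4 * (0 * b + 1 * c + 0) /\ e1 * (-1 * b + 0 * c + 1) - 0 * (-1 * b + 1 * c + 0) + e4 * (0 * b + 1 * c + 0) <= 1 by apply: (conv_lin F4); ring.
have H5 : -1 <= e1 * (0 * b + 1 * c + -1) - 0 * (-1 * b + 1 * c + 0) + e4 * (-1 * b + 0 * c + 0) /\ e1 * (0 * b + 1 * c + -1) - 0 * (-1 * b + 1 * c + 0) + e4 * (-1 * b + 0 * c + 0) <= 1 by apply: (conv_lin F5); ring.
have H6 : -1 <= 0 * (0 * b + 1 * c + -1) - e3 * (-1 * b + 0 * c + 1) + e4 * (-1 * b + -1 * c + 1) /\ 0 * (0 * b + 1 * c + -1) - e3 * (-1 * b + 0 * c + 1) + e4 * (-1 * b + -1 * c + 1) <= 1 by apply: (conv_lin F6); ring.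
have H7 : -1 <= 0 * (-1 * b + 0 * c + 1) - e2 * (0 * b + 1 * c + -1) + e4 * (1 * b + 1 * c + -1) /\ 0 * (-1 * b + 0 * c + 1) - e2 * (0 * b + 1 * c + -1) + e4 * (1 * b + 1 * c + -1) <= 1 by apply: (conv_lin F7); ring.
have H8 : -1 <= e2 * (0 * b + 1 * c + -1) - e3 * (-1 * b + 0 * c + 1) + 0 * (-1 * b + -1 * c + 1) /\ e2 * (0 * b + 1 * c + -1) - e3 * (-1 * b + 0 * c + 1) + 0 * (-1 * b + -1 * c + 1) <= 1 by apply: (conv_lin F8); ring.
clear D1 D2 D3 D4 F1 F2 F3 F4 F5 F6 F7 F8 E1 E4 E5 E7 H Hr a0 a1 a0' Ae A.
move: Hone G1 G2 G3 G4 H1 H2 H3 H4 H5 H6 H7 H8.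
case: He1 => ->; case: He2 => ->; case: He3 => ->; case: He4 => -> => Hone G1 G2 G3 G4 H1 H2 H3 H4 H5 H6 H7 H8.
- split.
  + by move=> [E|E]; kill E.
  + by move=> [E|E]; kill E.
  + move=> _; have [hb hc] : b = 1/2 /\ c = 1/2 by lra.
    apply/matrixP => i j; rewrite !mxE; case: i => [[|[|[|?]]] ?] //=; lra.
- split.
  + by move=> [E|E]; kill E.
  + by move=> [E|E]; kill E.
  + move=> _; have [hb hc] : b = 1/2 /\ c = 1/2 by lra.
    apply/matrixP => i j; rewrite !mxE; case: i => [[|[|[|?]]] ?] //=; lra.
- split.
  + by move=> [E|E]; kill E.
  + by move=> [E|E]; kill E.
  + move=> _; have [hb hc] : b = 1/2 /\ c = 1/2 by lra.
    apply/matrixP => i j; rewrite !mxE; case: i => [[|[|[|?]]] ?] //=; lra.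
- split.
  + by move=> [E|E]; kill E.
  + move=> [E|E]; last by kill E.
    have [hb1 [hb2 hc]] : 1/4 <= c /\ c <= 3/4 /\ b = 1/2 by lra.
    exists (2*c - 1/2); split; [lra|lra|]. apply/matrixP => i j; rewrite !mxE; case: i => [[|[|[|?]]] ?] //=; lra.
  + move=> Hn; exfalso; apply: Hn; by [left|right;left|right;right;left|right;right;right].
- split.
  + by move=> [E|E]; kill E.
  + by move=> [E|E]; kill E.
  + move=> _; have [hb hc] : b = 1/2 /\ c = 1/2 by lra.
    apply/matrixP => i j; rewrite !mxE; case: i => [[|[|[|?]]] ?] //=; lra.
- split.
  + move=> [E|E]; last by kill E.
    have [hb1 [hb2 hc]] : 1/4 <= b /\ b <= 3/4 /\ c = 1/2 by lra.
    exists (2*b - 1/2); split; [lra|lra|]. apply/matrixP => i j; rewrite !mxE; case: i => [[|[|[|?]]] ?] //=; lra.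
  + by move=> [E|E]; kill E.
  + move=> Hn; exfalso; apply: Hn; by [left|right;left|right;right;left|right;right;right].
- split.
  + by move=> [E|E]; kill E.
  + by move=> [E|E]; kill E.
  + move=> _; have [hb hc] : b = 1/2 /\ c = 1/2 by lra.
    apply/matrixP => i j; rewrite !mxE; case: i => [[|[|[|?]]] ?] //=; lra.
- split.
  + by move=> [E|E]; kill E.
  + by move=> [E|E]; kill E.
  + move=> _; have [hb hc] : b = 1/2 /\ c = 1/2 by lra.
    apply/matrixP => i j; rewrite !mxE; case: i => [[|[|[|?]]] ?] //=; lra.
- split.
  + by move=> [E|E]; kill E.
  + by move=> [E|E]; kill E.
  + move=> _; have [hb hc] : b = 1/2 /\ c = 1/2 by lra.
    apply/matrixP => i j; rewrite !mxE; case: i => [[|[|[|?]]] ?] //=; lra.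
- split.
  + by move=> [E|E]; kill E.
  + by move=> [E|E]; kill E.
  + move=> _; have [hb hc] : b = 1/2 /\ c = 1/2 by lra.
    apply/matrixP => i j; rewrite !mxE; case: i => [[|[|[|?]]] ?] //=; lra.
- split.
  + move=> [E|E]; first by kill E.
    have [hb1 [hb2 hc]] : 1/4 <= b /\ b <= 3/4 /\ c = 1/2 by lra.
    exists (2*b - 1/2); split; [lra|lra|]. apply/matrixP => i j; rewrite !mxE; case: i => [[|[|[|?]]] ?] //=; lra.
  + by move=> [E|E]; kill E.
  + move=> Hn; exfalso; apply: Hn; by [left|right;left|right;right;left|right;right;right].
- split.
  + by move=> [E|E]; kill E.
  + by move=> [E|E]; kill E.
  + move=> _; have [hb hc] : b = 1/2 /\ c = 1/2 by lra.
    apply/matrixP => i j; rewrite !mxE; case: i => [[|[|[|?]]] ?] //=; lra.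
- split.
  + by move=> [E|E]; kill E.
  + move=> [E|E]; first by kill E.
    have [hb1 [hb2 hc]] : 1/4 <= c /\ c <= 3/4 /\ b = 1/2 by lra.
    exists (2*c - 1/2); split; [lra|lra|]. apply/matrixP => i j; rewrite !mxE; case: i => [[|[|[|?]]] ?] //=; lra.
  + move=> Hn; exfalso; apply: Hn; by [left|right;left|right;right;left|right;right;right].
- split.
  + by move=> [E|E]; kill E.
  + by move=> [E|E]; kill E.
  + move=> _; have [hb hc] : b = 1/2 /\ c = 1/2 by lra.
    apply/matrixP => i j; rewrite !mxE; case: i => [[|[|[|?]]] ?] //=; lra.
- split.
  + by move=> [E|E]; kill E.
  + by move=> [E|E]; kill E.
  + move=> _; have [hb hc] : b = 1/2 /\ c = 1/2 by lra.
    apply/matrixP => i j; rewrite !mxE; case: i => [[|[|[|?]]] ?] //=; lra.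
- exfalso; case: Hone => [|[|[|]]]; exact: m1n1.
Qed.
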